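(* Let $\boldsymbol{\mu}=(\mu_1,\mu_2)\in\Lambda$ with $\mu_1>\mu_2$ and $\mu_1+\mu_2\ge1$. Then for every $\delta$ with $0<\delta\le\min\{x^\star(\boldsymbol{\mu}),1-x^\star(\boldsymbol{\mu})\}$, $$g(x^\star(\boldsymbol{\mu})-\delta,\boldsymbol{\mu})\ge g(x^\star(\boldsymbol{\mu})+\delta,\boldsymbol{\mu}).$$
   Context: $\Lambda=\{\boldsymbol{\mu}\in(0,1)^2:\mu_1\neq\mu_2\}$ (means of a two-armed Bernoulli bandit). For $p,q\in(0,1)$ let $d(p,q)$ be the Bernoulli Kullback–Leibler divergence. For $x\in[0,1]$, $g(x,\boldsymbol{\mu})=\inf_{\lambda\in(0,1)}\big[(1-x)d(\lambda,\mu_1)+x\,d(\lambda,\mu_2)\big]=-\log\big((1-\mu_1)^{1-x}(1-\mu_2)^x+\mu_1^{1-x}\mu_2^x\big)$, and $x^\star(\boldsymbol{\mu})=\arg\max_{x\in(0,1)}g(x,\boldsymbol{\mu})$. *)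

(* Defs.v *)
From Stdlib Require Import Reals.
Open Scope R_scope.

(* g(x, mu) = -log((1-mu1)^(1-x) (1-mu2)^x + mu1^(1-x) mu2^x),
   the closed form given in the context for
   inf_{lambda in (0,1)} [(1-x) d(lambda,mu1) + x d(lambda,mu2)]. *)
Definition g (x mu1 mu2 : R) : R :=
  - ln (Rpower (1 - mu1) (1 - x) * Rpower (1 - mu2) x
        + Rpower mu1 (1 - x) * Rpower mu2 x).

Definition in_Lambda (mu1 mu2 : R) : Prop :=
  0 < mu1 < 1 /\ 0 < mu2 < 1 /\ mu1 <> mu2.

Definition is_xstar (xs mu1 mu2 : R) : Prop :=
  0 < xs < 1 /\ forall x, 0 < x < 1 -> g x mu1 mu2 <= g xs mu1 mu2.

(* Main.v *)
Require Import Defs.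
From Stdlib Require Import Reals Lra Psatz.
From Coquelicot Require Import Coquelicot.
Open Scope R_scope.

Lemma exp_le' (x y : R) : x <= y -> exp x <= exp y.
Proof. intros [H|H]; [left; apply exp_increasing; exact H | subst; right; reflexivity]. Qed.

Lemma cosh_mono (u v : R) : 0 <= v -> v <= u ->
  exp v + exp (- v) <= exp u + exp (- u).
Proof.
  intros Hv Hvu.
  assert (H1 : exp v <= exp u) by (apply exp_le'; lra).
  assert (H2 : exp (- u) * exp (- v) <= 1).
  { rewrite <- exp_plus. rewrite <- exp_0. apply exp_le'; lra. }
  assert (E : exp u + exp (- u) - (exp v + exp (- v)) =
     (exp u - exp v) * (1 - exp (- u) * exp (- v))).
  { rewrite !exp_Ropp. field. split; apply Rgt_not_eq; apply exp_pos. }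
  nra.
Qed.

Theorem mainTheorem2 (mu1 mu2 xs delta : R) :
  in_Lambda mu1 mu2 -> mu1 > mu2 -> mu1 + mu2 >= 1 ->
  is_xstar xs mu1 mu2 ->
  0 < delta -> delta <= Rmin xs (1 - xs) ->
  g (xs - delta) mu1 mu2 >= g (xs + delta) mu1 mu2.
Proof.
  intros [[H1a H1b] [[H2a H2b] Hne]] H12 Hsum [[Hx0 Hx1] Hmax] Hd Hdm.
  set (La := ln (1 - mu1)). set (Lb := ln (1 - mu2)).
  set (Lc := ln mu1). set (Ld := ln mu2).
  set (e1 := fun x => exp ((1 - x) * La + x * Lb)).
  set (e2 := fun x => exp ((1 - x) * Lc + x * Ld)).
  assert (Hg : forall x, g x mu1 mu2 = - ln (e1 x + e2 x)).
  { intro x. unfold g, Rpower, e1, e2. rewrite !exp_plus. reflexivity. }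
  assert (He1 : forall x, 0 < e1 x) by (intro; apply exp_pos).
  assert (He2 : forall x, 0 < e2 x) by (intro; apply exp_pos).
  set (p := Lb - La). set (q := Lc - Ld).
  set (A := e1 xs). set (C := e2 xs).
  assert (Hder : derivable_pt_lim (fun x => g x mu1 mu2) xs
            (- ((Lb - La) * e1 xs + (Ld - Lc) * e2 xs) / (e1 xs + e2 xs))).
  { apply is_derive_Reals.
    apply (is_derive_ext (fun x => - ln (e1 x + e2 x))).
    { intro t. rewrite Hg. reflexivity. }
    unfold e1, e2. auto_derive.
    - apply Rplus_lt_0_compat; apply exp_pos.
    - cbv beta. replace (1 + - xs) with (1 - xs) by ring. field. apply Rgt_not_eq, Rplus_lt_0_compat; apply exp_pos. }
  assert (Hfoc : p * A = q * C).
  { pose (pr := exist (fun l => derivable_pt_lim (fun x => g x mu1 mu2) xs l) _ Hder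
                : derivable_pt (fun x => g x mu1 mu2) xs).
    assert (Z := deriv_maximum (fun x => g x mu1 mu2) 0 1 xs pr Hx0 Hx1
                   (fun x h1 h2 => Hmax x (conj h1 h2))).
    simpl in Z.
    pose proof (He1 xs). pose proof (He2 xs).
    unfold p, q, A, C.
    assert (Hn : (Lb - La) * e1 xs + (Ld - Lc) * e2 xs = 0).
    { unfold Rdiv in Z. apply Rmult_integral in Z. destruct Z as [Z|Z].
      - lra.
      - exfalso. apply (Rinv_neq_0_compat (e1 xs + e2 xs)); [lra | exact Z]. }
    lra. }
  assert (Hq : 0 <= q).
  { unfold q, Lc, Ld. assert (ln mu2 < ln mu1) by (apply ln_increasing; lra). lra. }
  assert (Hpq : q <= p).
  { unfold p, q, La, Lb, Lc, Ld.
    assert (ln ((1 - mu1) * mu1) <= ln ((1 - mu2) * mu2)).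
    { apply ln_le. nra. nra. }
    rewrite !ln_mult in H by lra. lra. }
  assert (HA : 0 < A) by apply He1.
  assert (HC : 0 < C) by apply He2.
  assert (E1 : forall t, e1 (xs + t) = A * exp (p * t)).
  { intro t. unfold A, e1, p. rewrite <- exp_plus. f_equal. ring. }
  assert (E2 : forall t, e2 (xs + t) = C * exp (- (q * t))).
  { intro t. unfold C, e2, q. rewrite <- exp_plus. f_equal. ring. }
  set (k := fun t => A * (exp (p * t) - exp (- (p * t)))
                     - C * (exp (q * t) - exp (- (q * t)))).
  set (k' := fun t => A * p * (exp (p * t) + exp (- (p * t)))
                     - C * q * (exp (q * t) + exp (- (q * t)))).
  assert (Hk : forall c, 0 <= c <= delta -> derivable_pt_lim k c (k' c)).
  { intros c _. apply is_derive_Reals. unfold k, k'. auto_derive; auto. ring. }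
  destruct (MVT_cor2 k k' 0 delta Hd Hk) as [c [Hc Hcr]].
  assert (Hk'c : 0 <= k' c).
  { unfold k'. rewrite (Rmult_comm C q), <- Hfoc, (Rmult_comm p A).
    assert (HAp : 0 <= A * p) by nra.
    pose proof (cosh_mono (p * c) (q * c) ltac:(nra) ltac:(nra)). nra. }
  assert (Hkd : 0 <= k delta).
  { assert (k 0 = 0) by (unfold k; rewrite !Rmult_0_r, Ropp_0; ring).
    nra. }
  rewrite !Hg.
  assert (ln (e1 (xs - delta) + e2 (xs - delta)) <= ln (e1 (xs + delta) + e2 (xs + delta))).
  { apply ln_le.
    - pose proof (He1 (xs - delta)). pose proof (He2 (xs - delta)). lra.
    - replace (xs - delta) with (xs + - delta) by ring.
      rewrite !E1, !E2. unfold k in Hkd.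
      replace (p * - delta) with (- (p * delta)) by ring.
      replace (- (q * - delta)) with (q * delta) by ring.
      lra. }
  lra.
Qed.
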